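(* Assume $\|\mathbf{x}_t\|_\infty\le1$ for all $t$. Let $\mathbf{v}\in\mathbb{R}^d$ be any vector (fixed given $B_1,\dots,B_{\tau-1}$) and $\mathbf{z}_\tau=\mathbf{h}_{\tau^2}\mathbf{v}-\mathbf{x}_{\tau^2}\mathbf{x}_{\tau^2}^\top\mathbf{v}$. Then for all $i\in[d]$, $$|z_{\tau,i}|\le\frac{(d-1)(d-2)}{(k-1)(k-2)}\|\mathbf{v}\|_1,\qquad\mathbb{E}_\tau[z_{\tau,i}^2]\le\Big(\frac{(d-1)(d-2)}{(k-1)(k-2)}-1\Big)\|\mathbf{v}\|_2^2+\Big(\frac{d-1}{k-1}-1\Big)\big(\|\mathbf{v}\|_1^2-\|\mathbf{v}\|_2^2\big).$$
   Context: Integers $3\le k\le d-3$, $[d]=\{1,\dots,d\}$. SAMPLING$(k,d,\mathbf{w})$ for nonzero $\mathbf{w}\in\mathbb{R}^d$: with $q_i=|w_i|/\|\mathbf{w}\|_1$, draw $I_1\in[d]$ with $\mathbb{P}(I_1=i)=q_i$, then $k-1$ distinct indices uniformly without replacement from $[d]\setminus\{I_1\}$; output the $k$-set $B$. At round $\tau$, $B_\tau=$SAMPLING$(k,d,\hat{\mathbf{w}}_{\tau-1})$ for a nonzero vector $\hat{\mathbf{w}}_{\tau-1}$ determined by $B_1,\dots,B_{\tau-1}$ ($\hat{\mathbf{w}}_0=\frac1d\mathbf{1}_d$). $\mathbb{P}$ and $\mathbb{E}_\tau[\cdot]=\mathbb{E}[\cdot\mid B_1,\dots,B_{\tau-1}]$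 are over $B_\tau$. The instance $\mathbf{x}_{\tau^2}\in\mathbb{R}^d$ is fixed given the past; $h_{\tau^2}[i,i]=\frac{x_{\tau^2,i}^2}{\mathbb{P}[i\in B_\tau]}\mathbb{I}_{i\in B_\tau}$ and $h_{\tau^2}[i,j]=\frac{x_{\tau^2,i}x_{\tau^2,j}}{\mathbb{P}[i,j\in B_\tau]}\mathbb{I}_{i,j\in B_\tau}$ for $i\ne j$. *)

(* Defs.v *)
From HB Require Import structures.
From mathcomp Require Import all_boot all_order all_algebra.
Set Implicit Arguments. Unset Strict Implicit. Unset Printing Implicit Defensive.
Import Order.TTheory GRing.Theory Num.Theory.
Local Open Scope ring_scope.

Section Sampling.
Variables (R : realFieldType) (d k : nat).

Definition qprob (w : 'cV[R]_d) (i : 'I_d) : R :=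
  `|w i 0| / \sum_(j < d) `|w j 0|.

(* SAMPLING(k,d,w): draw I_1 = i with prob. q_i, then a (k-1)-subset S of
   [d] \ {i} uniformly (each with prob. 1 / C(d-1,k-1)); output B = {i} u S.
   samplingP w B is the probability that the output equals B. *)
Definition samplingP (w : 'cV[R]_d) (B : {set 'I_d}) : R :=
  \sum_(i < d) \sum_(S : {set 'I_d} | (i \notin S) && (#|S| == k.-1)%N)
     (qprob w i / ('C(d.-1, k.-1))%:R) * (i |: S == B)%:R.

Definition prob1 (w : 'cV[R]_d) (i : 'I_d) : R :=
  \sum_(B : {set 'I_d} | i \in B) samplingP w B.
Definition prob2 (w : 'cV[R]_d) (i j : 'I_d) : R :=
  \sum_(B : {set 'I_d} | (i \in B) && (j \in B)) samplingP w B.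

Definition Esamp (w : 'cV[R]_d) (f : {set 'I_d} -> R) : R :=
  \sum_(B : {set 'I_d}) samplingP w B * f B.

Definition hmat (w x : 'cV[R]_d) (B : {set 'I_d}) : 'M[R]_d :=
  \matrix_(i, j)
    if i == j then x i 0 ^+ 2 / prob1 w i * (i \in B)%:R
    else x i 0 * x j 0 / prob2 w i j * ((i \in B) && (j \in B))%:R.

Definition zvec (w x v : 'cV[R]_d) (B : {set 'I_d}) : 'cV[R]_d :=
  hmat w x B *m v - x *m x^T *m v.

Definition norm1 (v : 'cV[R]_d) : R := \sum_(i < d) `|v i 0|.
Definition norm2sq (v : 'cV[R]_d) : R := \sum_(i < d) v i 0 ^+ 2.

End Sampling.

(* Main.v *)
Require Import Defs.
From HB Require Import structures.
From mathcomp Require Import all_boot all_order all_algebra.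
From mathcomp Require Import ring lra zify.
Set Implicit Arguments. Unset Strict Implicit. Unset Printing Implicit Defensive.
Import Order.TTheory GRing.Theory Num.Theory.
Local Open Scope ring_scope.


Lemma count_sub (T: finType) (U T' : {set T}) n : T' \subset U -> (#|T'| <= n)%N ->
 #|[set S : {set T} | S \subset U & (#|S| == n) && (T' \subset S)]| = 'C(#|U :\: T'|, n - #|T'|).
Proof.
move=> sTU ltn.
rewrite -cards_draws.
have -> : [set S : {set T} | S \subset U & (#|S| == n) && (T' \subset S)]
   = (fun X => X :|: T') @: [set A : {set T} | A \subset U :\: T' & #|A| == n - #|T'|]%N.
  apply/setP => S; rewrite inE; apply/idP/imsetP.
  - case/andP => sSU /andP [/eqP cS sTS].
    exists (S :\: T').
      rewrite inE setSD //= cardsD (setIidPr sTS) cS //.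
    apply/setP=> y; rewrite !inE; case yT: (y \in T'); rewrite /= ?andbT ?orbT ?orbF //.
    by move/subsetP: sTS => /(_ y yT) ->.
  - case=> X; rewrite inE => /andP [sX /eqP cX] ->.
    have dX : [disjoint X & T'].
      by rewrite -setI_eq0; apply/eqP/setP=> y; rewrite !inE;
         apply/negbTE/negP => /andP [yX yT]; move/subsetP: sX => /(_ y yX); by rewrite !inE yT.
    rewrite subUset sTU (subset_trans sX) ?subsetDl // subsetUr andbT.
    by rewrite cardsU (disjoint_setI0 dX) cards0 subn0 cX subnK // eqxx.
apply: (card_in_imset (f := fun X => X :|: T')) => X Y; rewrite !inE => /andP [sX _] /andP [sY _] eXY.
have h (Z : {set T}) : Z \subset U :\: T' -> Z = (Z :|: T') :\: T'.
  move=> sZ; rewrite setDUl setDv setU0; apply/esym/setDidPl.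
  rewrite -setI_eq0; apply/eqP/setP=> y; rewrite !inE;
  apply/negbTE/negP => /andP [yX yT]; move/subsetP: sZ => /(_ y yX); by rewrite !inE yT.
by rewrite (h X sX) (h Y sY) eXY.
Qed.


Section S.
Variables (R : realFieldType) (d k : nat) (w : 'cV[R]_d).
Hypothesis hnN : (k.-1 <= d.-1)%N.

Definition gg (t : nat) : R :=
  if (t <= k.-1)%N then 'C(d.-1 - t, k.-1 - t)%:R / 'C(d.-1, k.-1)%:R else 0.

Definition PT (T : {set 'I_d}) : R :=
  \sum_(B : {set 'I_d}) samplingP k w B * (T \subset B)%:R.

Lemma sum_eqB (X : {set 'I_d}) (c : R) (f : {set 'I_d} -> R) :
  \sum_(B : {set 'I_d}) c * (X == B)%:R * f B = c * f X.
Proof.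
rewrite (bigD1 X) //= eqxx mulr1 big1 ?addr0 // => B /negbTE.
by rewrite eq_sym => ->; rewrite mulr0 mul0r.
Qed.

Lemma sub_setU1 (T S : {set 'I_d}) m : (T \subset m |: S) = (T :\ m \subset S).
Proof.
apply/subsetP/subsetP => h y; rewrite ?inE.
  by case/andP => ym /h; rewrite in_setU1 (negbTE ym).
case: (eqVneq y m) => [->|ym] yT; first by [].
by rewrite /= h // in_setD1 ym yT.
Qed.

Lemma count_m (T : {set 'I_d}) m :
  \sum_(S : {set 'I_d} | (m \notin S) && (#|S| == k.-1)%N) (T \subset m |: S)%:R
  = (if (#|T :\ m| <= k.-1)%N then 'C(d.-1 - #|T :\ m|, k.-1 - #|T :\ m|) else 0%N)%:R :> R.
Proof.
rewrite (eq_bigr (fun S => if T \subset m |: S then 1 else 0)); last by move=> S _; case: (_ \subset _).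
rewrite -big_mkcondr /= sumr_const.
have -> : #|(fun S : {set 'I_d} => (m \notin S) && (#|S| == k.-1)%N && (T \subset m |: S))| = #|[set S : {set 'I_d} | S \subset [set~ m] & (#|S| == k.-1)%N && (T :\ m \subset S)]|.
  apply: eq_card => S; rewrite inE -sub_setU1 subsetC sub1set inE andbA.
  by [].
case: ifP => hle.
  rewrite count_sub //.
    rewrite cardsD cardsC1 card_ord.
    have -> : [set~ m] :&: (T :\ m) = T :\ m.
      by apply/setIidPr/subsetP => y; rewrite !inE => /andP [].
    by [].
  by apply/subsetP => y; rewrite !inE => /andP [].
rewrite eq_card0 // => S; rewrite !inE.
apply/negbTE/negP => /andP [_ /andP [/eqP cS sTS]].
by move: (subset_leq_card sTS); rewrite cS hle.
Qed.

Lemma PT_E (T : {set 'I_d}) : PT T = \sum_(m < d) qprob w m * gg #|T :\ m|.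
Proof.
rewrite /PT /samplingP.
under eq_bigr => B _ do rewrite big_distrl /=.
rewrite exchange_big /=; apply: eq_bigr => m _.
under eq_bigr => B _ do rewrite big_distrl /=.
rewrite exchange_big /=.
under eq_bigr => S _ do rewrite sum_eqB.
rewrite -big_distrr /= count_m /gg.
case: ifP => _; last by rewrite !mulr0.
by rewrite mulrAC -mulrA.
Qed.

End S.


Lemma key3 (R : realFieldType) (r1 r2 r3 x y s : R) :
  0 < r2 -> 0 <= r3 -> r3 <= r2 -> r2 <= r1 -> r1 <= 1 -> 2 * r1 - 1 <= r3 ->
  0 <= x -> 0 <= y -> x <= s -> y <= s -> s <= x + y -> s <= 1 ->
  `|(s * (r1 * r2) + (1 - s) * (r1 * r2 * r3)) /
     ((x * r1 + (1 - x) * (r1 * r2)) * (y * r1 + (1 - y) * (r1 * r2))) - 1|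
  <= r1^-1 - 1.
Proof.
move=> r2p r3p r32 r21 r11 r3l xp yp xs ys sxy s1.
have r1p : 0 < r1 by lra.
set X := x + (1 - x) * r2. set Y := y + (1 - y) * r2. set Z := s + (1 - s) * r3.
have Xp : 0 < X by rewrite /X; nra.
have Yp : 0 < Y by rewrite /Y; nra.
have X1 : X <= 1 by rewrite /X; nra.
have Y1 : Y <= 1 by rewrite /Y; nra.
have Zp : 0 <= Z by rewrite /Z; nra.
have -> : (s * (r1 * r2) + (1 - s) * (r1 * r2 * r3)) /
     ((x * r1 + (1 - x) * (r1 * r2)) * (y * r1 + (1 - y) * (r1 * r2)))
   = (r2 * Z) / (r1 * (X * Y)).
  rewrite /X /Y /Z; field.
  have e1 : x * r1 + (1 - x) * (r1 * r2) = r1 * X by rewrite /X; ring.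
  have e2 : y * r1 + (1 - y) * (r1 * r2) = r1 * Y by rewrite /Y; ring.
  by rewrite e1 e2 -/X -/Y !mulf_neq0 ?gt_eqF.
have D : 0 < r1 * (X * Y) by rewrite !mulr_gt0.
have U : r2 * Z <= X * Y.
  have e : X * Y - r2 * Z = r2 * (1 - r2) * (x + y - s) + x * y * (1 - r2) ^+ 2 + r2 * (r2 - r3) * (1 - s).
    by rewrite /X /Y /Z; ring.
  rewrite -subr_ge0 e.
  have h1 : 0 <= r2 * (1 - r2) * (x + y - s) by rewrite !mulr_ge0 //; lra.
  have h2 : 0 <= x * y * (1 - r2) ^+ 2.
    by apply: mulr_ge0; [apply: mulr_ge0|apply: sqr_ge0].
  have h3 : 0 <= r2 * (r2 - r3) * (1 - s) by rewrite !mulr_ge0 //; lra.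
  lra.
have L : (2 * r1 - 1) * (X * Y) <= r2 * Z.
  have [hn|hp] := lerP (2 * r1 - 1) 0.
    have : 0 <= r2 * Z by rewrite mulr_ge0 // ltW.
    have : (2 * r1 - 1) * (X * Y) <= 0 by rewrite mulr_le0_ge0 // mulr_ge0 // ltW.
    lra.
  have h1 : (2 * r1 - 1) * (X * Y) <= (2 * r1 - 1) * X.
    by rewrite ler_pM2l // ger_pMr.
  have h2 : r2 * (x + (1 - x) * r3) <= r2 * Z.
    rewrite ler_pM2l // /Z; nra.
  have h3 : (2 * r1 - 1) * X <= r2 * (x + (1 - x) * r3).
    rewrite -subr_ge0.
    have -> : r2 * (x + (1 - x) * r3) - (2 * r1 - 1) * X
       = x * (r2 - (2 * r1 - 1)) + (1 - x) * r2 * (r3 - (2 * r1 - 1)) by rewrite /X; ring.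
    have : 0 <= x * (r2 - (2 * r1 - 1)) by rewrite mulr_ge0 //; lra.
    have : 0 <= (1 - x) * r2 * (r3 - (2 * r1 - 1)) by rewrite !mulr_ge0 //; lra.
    lra.
  lra.
rewrite ler_norml; apply/andP; split.
  suff : 2 - r1^-1 <= r2 * Z / (r1 * (X * Y)) by lra.
  rewrite ler_pdivlMr //.
  have -> : (2 - r1^-1) * (r1 * (X * Y)) = (2 * r1 - 1) * (X * Y).
    by field; rewrite gt_eqF.
  exact: L.
rewrite lerBlDr subrK ler_pdivrMr //.
have -> : r1^-1 * (r1 * (X * Y)) = X * Y by field; rewrite gt_eqF.
exact: U.
Qed.


Lemma gg_S (R : realFieldType) d k t : (t < k.-1)%N -> (k.-1 <= d.-1)%N ->
  gg R d k t.+1 = gg R d k t * (k.-1 - t)%:R / (d.-1 - t)%:R.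
Proof.
move=> ht hn; rewrite /gg ht ltnW //.
have e := mul_bin_diag (d.-1 - t) (k.-1 - t.+1).
have e1 : (d.-1 - t).-1 = (d.-1 - t.+1)%N by lia.
have e2 : (k.-1 - t.+1).+1 = (k.-1 - t)%N by lia.
rewrite e1 e2 in e.
have hp : (0 < d.-1 - t)%N by lia.
have : ('C(d.-1 - t.+1, k.-1 - t.+1))%:R = (k.-1 - t)%:R * 'C(d.-1 - t, k.-1 - t)%:R / (d.-1 - t)%:R :> R.
  rewrite -natrM -e natrM [X in X / _]mulrC mulfK //.
  by rewrite pnatr_eq0 -lt0n.
move=> ->.
by ring.
Qed.

Lemma gg_0 (R : realFieldType) d k : (k.-1 <= d.-1)%N -> gg R d k 0 = 1.
Proof.
move=> hn; rewrite /gg leq0n !subn0 divff //.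
by rewrite pnatr_eq0 -lt0n bin_gt0.
Qed.

Lemma gg_big (R : realFieldType) d k t : (k.-1 < t)%N -> gg R d k t = 0.
Proof. by move=> h; rewrite /gg leqNgt h. Qed.


Section E.
Variables (R : realFieldType) (d k : nat) (w : 'cV[R]_d).
Hypothesis hw : w != 0.

Lemma qprob_ge0 m : 0 <= qprob w m.
Proof. by rewrite /qprob divr_ge0 // sumr_ge0. Qed.

Lemma qprob_sum : \sum_(m < d) qprob w m = 1.
Proof.
rewrite /qprob -mulr_suml divff //.
apply/eqP => h; move/eqP: hw; apply; apply/matrixP => a b.
rewrite (ord1 b) mxE; apply/normr0_eq0.
by apply: (psumr_eq0P _ h) => // j _.
Qed.

Definition QT (T : {set 'I_d}) := \sum_(m < d) qprob w m * (m \in T)%:R.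

Lemma QT_ge0 (T : {set 'I_d}) : 0 <= QT T.
Proof. by apply: sumr_ge0 => m _; rewrite mulr_ge0 ?qprob_ge0. Qed.

Lemma QT_le (T T' : {set 'I_d}) : (forall m, (m \in T)%:R <= (m \in T')%:R :> R) -> QT T <= QT T'.
Proof. by move=> h; apply: ler_sum => m _; rewrite ler_wpM2l ?qprob_ge0. Qed.

Lemma QT_le1 (T : {set 'I_d}) : QT T <= 1.
Proof.
rewrite -qprob_sum; apply: ler_sum => m _.
by rewrite ler_piMr ?qprob_ge0 //; case: (_ \in _).
Qed.

Lemma QT_sub (T1 T2 : {set 'I_d}) : QT (T1 :|: T2) <= QT T1 + QT T2.
Proof.
rewrite -big_split /=; apply: ler_sum => m _; rewrite -mulrDr ler_wpM2l ?qprob_ge0 //.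
by rewrite inE; case: (_ \in T1); case: (_ \in T2); rewrite /=; lra.
Qed.

Hypothesis hn : (k.-1 <= d.-1)%N.

Lemma PT_form (T : {set 'I_d}) : (0 < #|T|)%N ->
  PT k w T = QT T * gg R d k #|T|.-1 + (1 - QT T) * gg R d k #|T|.
Proof.
move=> hT; rewrite PT_E.
have -> : 1 - QT T = \sum_(m < d) qprob w m * (1 - (m \in T)%:R).
  under [in RHS]eq_bigr => m _ do rewrite mulrBr mulr1.
  by rewrite sumrB qprob_sum.
rewrite /QT !mulr_suml -big_split /=.
apply: eq_bigr => m _; rewrite (cardsD1 m T).
case: (m \in T); rewrite /= ?add1n ?add0n /=; ring.
Qed.

Lemma PT0 : PT k w set0 = 1.
Proof.
rewrite PT_E; under eq_bigr => m _ do rewrite set0D cards0 gg_0 // mulr1.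
exact: qprob_sum.
Qed.

End E.


Lemma rfacts (R : realFieldType) (a b : R) : 2 <= a -> a + 3 <= b ->
  let r1 := a / b in let r2 := (a - 1) / (b - 1) in let r3 := (a - 2) / (b - 2) in
  [/\ 0 < r1, 0 < r2, 0 <= r3, r3 <= r2 & [/\ r2 <= r1, r1 <= 1 & 2 * r1 - 1 <= r3]].
Proof.
move=> ha hb r1 r2 r3.
have b0 : b != 0 by apply/negP=> /eqP h; lra.
have b1 : b - 1 != 0 by apply/negP=> /eqP h; lra.
have b2 : b - 2 != 0 by apply/negP=> /eqP h; lra.
split.
- by rewrite divr_gt0 //; lra.
- by rewrite divr_gt0 //; lra.
- by rewrite divr_ge0 //; lra.
- rewrite -subr_ge0 (_ : r2 - r3 = (b - a) / ((b - 1) * (b - 2))).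
    by rewrite divr_ge0 // ?mulr_ge0; lra.
  by rewrite /r2 /r3; field; rewrite b1 b2.
split.
- rewrite -subr_ge0 (_ : r1 - r2 = (b - a) / (b * (b - 1))).
    by rewrite divr_ge0 // ?mulr_ge0; lra.
  by rewrite /r1 /r2; field; rewrite b0 b1.
- rewrite -subr_ge0 (_ : 1 - r1 = (b - a) / b).
    by rewrite divr_ge0 //; lra.
  by rewrite /r1; field.
- rewrite -subr_ge0 (_ : r3 - (2 * r1 - 1) = (b - a) * (b - 4) / (b * (b - 2))).
    by rewrite divr_ge0 // ?mulr_ge0; lra.
  by rewrite /r1 /r3; field; rewrite b0 b2.
Qed.


Lemma gg_vals (R : realFieldType) d k : (3 <= k)%N -> (k + 3 <= d)%N ->
  let a : R := (k.-1)%:R in let b : R := (d.-1)%:R in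
  [/\ gg R d k 0 = 1, gg R d k 1 = a / b,
      gg R d k 2 = a / b * ((a - 1) / (b - 1)) &
      gg R d k 3 = a / b * ((a - 1) / (b - 1)) * ((a - 2) / (b - 2))].
Proof.
move=> hk hd a b.
have hn : (k.-1 <= d.-1)%N by lia.
have h01 : (0 < k.-1)%N by lia.
have h12 : (1 < k.-1)%N by lia.
have g0 := gg_0 R hn.
have g1 : gg R d k 1 = a / b.
  by rewrite (gg_S _ h01 hn) g0 !subn0 mul1r.
have g2 : gg R d k 2 = a / b * ((a - 1) / (b - 1)).
  rewrite (gg_S _ h12 hn) g1 -mulrA !natrB //; lia.
split => //.
have [h3|h3] := ltnP 2 k.-1.
  by rewrite (gg_S _ h3 hn) g2 -mulrA !natrB //; lia.
have ea : a = 2 by rewrite /a (_ : k.-1 = 2)%N //; lia.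
rewrite gg_big; last by lia.
by rewrite ea subrr mul0r mulr0.
Qed.


Lemma sum_cond (R : realFieldType) d (P : pred {set 'I_d}) (f : {set 'I_d} -> R) :
  \sum_(B | P B) f B = \sum_B f B * (P B)%:R.
Proof. by rewrite big_mkcond; apply: eq_bigr => B _; case: (P B); rewrite ?mulr1 ?mulr0. Qed.

Lemma prob1E (R : realFieldType) d k (w : 'cV[R]_d) i : prob1 k w i = PT k w [set i; i].
Proof.
rewrite /prob1 /PT sum_cond; apply: eq_bigr => B _.
by rewrite subUset sub1set andbb.
Qed.

Lemma prob2E (R : realFieldType) d k (w : 'cV[R]_d) i j : prob2 k w i j = PT k w [set i; j].
Proof.
rewrite /prob2 /PT sum_cond; apply: eq_bigr => B _.
by rewrite subUset !sub1set.
Qed.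

Lemma zexp (R : realFieldType) d k (w x v : 'cV[R]_d) B i :
  zvec k w x v B i 0 = \sum_j (x i 0 * x j 0 * v j 0) *
     (([set i; j] \subset B)%:R / PT k w [set i; j] - 1).
Proof.
rewrite /zvec !mxE -sumrB; apply: eq_bigr => j _.
rewrite !mxE big_ord1 !mxE.
case: eqP => [<-|_]; rewrite ?prob1E ?prob2E.
  by rewrite subUset sub1set andbb (_ : ord0 = 0) //; ring.
by rewrite subUset !sub1set (_ : ord0 = 0) //; ring.
Qed.

Lemma pbounds (R : realFieldType) (Q r1 r2 : R) : 0 <= Q -> Q <= 1 -> 0 < r1 -> r1 <= 1 -> 0 < r2 -> r2 <= 1 ->
  [/\ r1 <= Q + (1 - Q) * r1, Q + (1 - Q) * r1 <= 1, r1 * r2 <= Q * r1 + (1 - Q) * (r1 * r2) &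
      Q * r1 + (1 - Q) * (r1 * r2) <= r1].
Proof.
move=> q0 q1 p1 r11 p2 r21.
have h1 : 0 <= Q * (1 - r1) by rewrite mulr_ge0 //; lra.
have h2 : 0 <= (1 - Q) * (1 - r1) by rewrite mulr_ge0 //; lra.
have h3 : 0 <= Q * r1 * (1 - r2) by rewrite !mulr_ge0 //; lra.
have h4 : 0 <= (1 - Q) * r1 * (1 - r2) by rewrite !mulr_ge0 //; lra.
split.
- have -> : Q + (1 - Q) * r1 = r1 + Q * (1 - r1) by ring. lra.
- have -> : Q + (1 - Q) * r1 = 1 - (1 - Q) * (1 - r1) by ring. lra.
- have -> : Q * r1 + (1 - Q) * (r1 * r2) = r1 * r2 + Q * r1 * (1 - r2) by ring. lra.
- have -> : Q * r1 + (1 - Q) * (r1 * r2) = r1 - (1 - Q) * r1 * (1 - r2) by ring. lra.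
Qed.



Lemma Esq (R : realFieldType) d (sP : {set 'I_d} -> R) (u : 'I_d -> R) (e : 'I_d -> {set 'I_d} -> R) :
  \sum_B sP B * (\sum_j u j * e j B) ^+ 2
  = \sum_j \sum_l u j * u l * (\sum_B sP B * (e j B * e l B)).
Proof.
have h B : sP B * (\sum_j u j * e j B) ^+ 2
    = \sum_j \sum_l u j * u l * (sP B * (e j B * e l B)).
  rewrite expr2 big_distrl /= mulr_sumr; apply: eq_bigr => j _.
  rewrite big_distrr /= mulr_sumr; apply: eq_bigr => l _; ring.
under eq_bigr => B _ do rewrite h.
rewrite exchange_big /=; apply: eq_bigr => j _.
rewrite exchange_big /=; apply: eq_bigr => l _.
by rewrite mulr_sumr.
Qed.

Lemma Eee (R : realFieldType) d k (w : 'cV[R]_d) (T1 T2 : {set 'I_d}) :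
  w != 0 -> (k.-1 <= d.-1)%N -> PT k w T1 != 0 -> PT k w T2 != 0 ->
  \sum_B samplingP k w B * (((T1 \subset B)%:R / PT k w T1 - 1) * ((T2 \subset B)%:R / PT k w T2 - 1))
  = PT k w (T1 :|: T2) / (PT k w T1 * PT k w T2) - 1.
Proof.
move=> hw hn n1 n2.
set p1 := PT k w T1; set p2 := PT k w T2.
have e B : samplingP k w B * (((T1 \subset B)%:R / p1 - 1) * ((T2 \subset B)%:R / p2 - 1))
  = samplingP k w B * (T1 :|: T2 \subset B)%:R * (p1^-1 * p2^-1)
    - samplingP k w B * (T1 \subset B)%:R * p1^-1
    - samplingP k w B * (T2 \subset B)%:R * p2^-1
    + samplingP k w B * (set0 \subset B)%:R.
  rewrite subUset sub0set -mulnb natrM. rewrite mulr1 /p1 /p2; ring.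
under eq_bigr => B _ do rewrite e.
rewrite big_split /= !sumrB -!mulr_suml.
have PTd (T : {set 'I_d}) : \sum_B samplingP k w B * (T \subset B)%:R = PT k w T by [].
rewrite !PTd PT0 // -/p1 -/p2 !divff // invfM.
ring.
Qed.

Lemma key1 (R : realFieldType) (p lo : R) : 0 < lo -> lo <= p -> p <= 1 ->
  `|p^-1 - 1| <= lo^-1 - 1.
Proof.
move=> l0 lp p1; have p0 : 0 < p by apply: lt_le_trans l0 lp.
have h1 : 1 <= p^-1 by rewrite invf_ge1.
have h2 : p^-1 <= lo^-1 by rewrite lef_pV2 // posrE.
by rewrite ger0_norm; lra.
Qed.

Lemma nzab (R : realFieldType) (a b : R) : 2 <= a -> a + 3 <= b ->
  [/\ b != 0, b - 1 != 0, a != 0 & a - 1 != 0].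
Proof.
move=> ha hb; split; apply/negP => /eqP h; lra.
Qed.

Unset Implicit Arguments.
Theorem corollary2 (R : realFieldType) (d k : nat)
    (hk : (3 <= k)%N) (hkd : (k <= d - 3)%N)
    (w x v : 'cV[R]_d)
    (hw : w != 0)
    (hx : forall i : 'I_d, `|x i 0| <= 1) :
  let c2 := ((d - 1) * (d - 2))%:R / ((k - 1) * (k - 2))%:R : R in
  let c1 := (d - 1)%:R / (k - 1)%:R : R in
  forall i : 'I_d,
    (forall B : {set 'I_d}, 0 < samplingP k w B ->
       `|zvec k w x v B i 0| <= c2 * norm1 v)
    /\
    Esamp k w (fun B => zvec k w x v B i 0 ^+ 2)
      <= (c2 - 1) * norm2sq v + (c1 - 1) * (norm1 v ^+ 2 - norm2sq v).
Proof.
move=> c2 c1 i.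
have hn : (k.-1 <= d.-1)%N by lia.
have hkd' : (k + 3 <= d)%N by lia.
have ed1 : (d - 1 = d.-1)%N by lia.
have ed2 : (d - 2 = d.-1 - 1)%N by lia.
have ek1 : (k - 1 = k.-1)%N by lia.
have ek2 : (k - 2 = k.-1 - 1)%N by lia.
have hk1 : (1 <= k.-1)%N by lia.
have hd1 : (1 <= d.-1)%N by lia.
set a : R := (k.-1)%:R; set b : R := (d.-1)%:R.
have ha : 2 <= a by rewrite /a ler_nat; lia.
have hb : a + 3 <= b.
  by rewrite /a /b -natrD ler_nat; lia.
set r1 := a / b; set r2 := (a - 1) / (b - 1); set r3 := (a - 2) / (b - 2).
have [r1p r2p r3p r32 [r21 r11 r3l]] : [/\ 0 < r1, 0 < r2, 0 <= r3, r3 <= r2 &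
   [/\ r2 <= r1, r1 <= 1 & 2 * r1 - 1 <= r3]] := rfacts ha hb.
have [g0 g1 g2 g3] : [/\ gg R d k 0%N = 1, gg R d k 1%N = r1, gg R d k 2%N = r1 * r2 &
   gg R d k 3%N = r1 * r2 * r3] := gg_vals R hk hkd'.
have [b0 b1 a0 a1] := nzab ha hb.
have ec2 : c2 = (r1 * r2)^-1.
  rewrite /c2 ed1 ed2 ek1 ek2 !natrM !natrB // -/a -/b /r1 /r2.
  by field; rewrite b0 b1 a0 a1.
have ec1 : c1 = r1^-1 by rewrite /c1 ed1 ek1 invf_div.
pose p j := PT k w [set i; j].
pose Q j := QT w [set i; j].
have Qb j : 0 <= Q j /\ Q j <= 1 by split; [apply: QT_ge0 | apply: QT_le1].
have pii : r1 <= p i /\ p i <= 1.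
  have [q0 q1] := Qb i.
  have [h1 h2 _ _] := pbounds q0 q1 r1p r11 r2p (le_trans r21 r11).
  by rewrite /p PT_form ?cards2 // eqxx /= g0 g1 mulr1.
have pjf j : j != i -> p j = Q j * r1 + (1 - Q j) * (r1 * r2).
  by move=> ne; rewrite /p PT_form ?cards2 // eq_sym ne /= g1 g2.
have pj j : r1 * r2 <= p j /\ p j <= 1.
  have [->|ne] := eqVneq j i.
    have [h1 h2] := pii; split => //.
    apply: le_trans h1; rewrite ler_piMr //; [exact: ltW r1p | exact: le_trans r21 r11].
  have [q0 q1] := Qb j.
  have [_ _ h1 h2] := pbounds q0 q1 r1p r11 r2p (le_trans r21 r11).
  by rewrite pjf //; split => //; apply: le_trans h2 r11.
have r12p : 0 < r1 * r2 by rewrite mulr_gt0.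
have pj0 j : p j != 0.
  by have [h1 _] := pj j; rewrite gt_eqF // (lt_le_trans r12p h1).
have uj j : `|x i 0 * x j 0 * v j 0| <= `|v j 0|.
  rewrite !normrM -[X in _ <= X]mul1r ler_wpM2r //.
  by rewrite mulr_ile1 // ?hx.
have c2ge : 1 <= c2.
  rewrite ec2 invf_ge1 // mulr_ile1 //; [exact: ltW r1p | exact: ltW r2p | exact: le_trans r21 r11].
split.
  move=> B _; rewrite zexp.
  apply: le_trans (ler_norm_sum _ _ _) _.
  rewrite /norm1 mulr_sumr; apply: ler_sum => j _.
  rewrite normrM mulrC; apply: ler_pM => //.
  case: (_ \subset B) => /=.
    rewrite mul1r; have [h1 h2] := pj j.
    apply: le_trans (key1 r12p h1 h2) _.
    by rewrite ec2 lerBlDr lerDl.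
  by rewrite mul0r sub0r normrN normr1.
have setb m (A B : {set 'I_d}) : (m \in A)%:R <= (m \in A :|: B)%:R :> R.
  by rewrite inE; case: (m \in A); case: (m \in B); rewrite /= ?lexx ?ler01.
have Kb j l : `|PT k w ([set i; j] :|: [set i; l]) / (p j * p l) - 1|
    <= (if j == l then c2 - 1 else c1 - 1).
  have [<-|ne] := eqVneq j l.
    rewrite ?eqxx setUid -/(p j).
    have -> : p j / (p j * p j) = (p j)^-1 by rewrite invfM mulrA divff ?mul1r // pj0.
    have [h1 h2] := pj j; rewrite ec2; exact: key1 r12p h1 h2.
  rewrite ?(negbTE ne).
  have [ej|nj] := eqVneq j i.
    rewrite ej.
    have -> : [set i; i] :|: [set i; l] = [set i; l].
      by apply/setP => y; rewrite !inE; case: (y == i); case: (y == l).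
    rewrite -/(p l) -/(p i).
    have -> : p l / (p i * p l) = (p i)^-1 by rewrite invfM mulrCA divff ?mulr1 // pj0.
    have [h1 h2] := pii; rewrite ec1; exact: key1 r1p h1 h2.
  have [el|nl] := eqVneq l i.
    rewrite el.
    have -> : [set i; j] :|: [set i; i] = [set i; j].
      by apply/setP => y; rewrite !inE; case: (y == i); case: (y == j).
    rewrite -/(p j) -/(p i).
    have -> : p j / (p j * p i) = (p i)^-1 by rewrite invfM mulrA divff ?mul1r // pj0.
    have [h1 h2] := pii; rewrite ec1; exact: key1 r1p h1 h2.
  have eU : [set i; j] :|: [set i; l] = l |: [set i; j].
    by apply/setP => y; rewrite !inE; case: (y == i); case: (y == j); case: (y == l).
  have c3 : #|l |: [set i; j]| = 3%N.
    by rewrite cardsU1 cards2 !inE (negbTE nl) [l == j]eq_sym (negbTE ne) eq_sym nj.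
  rewrite eU PT_form ?c3 // /= g2 g3 -eU.
  rewrite -/(p j) -/(p l) (pjf j nj) (pjf l nl) ec1.
  have [qj0 _] := Qb j; have [ql0 _] := Qb l.
  apply: key3 => //.
  - exact: QT_le.
  - by rewrite setUC; apply: QT_le.
  - exact: QT_sub.
  - exact: QT_le1.
rewrite /Esamp.
under eq_bigr => B _ do rewrite zexp.
rewrite (Esq _ (fun j => x i 0 * x j 0 * v j 0)
   (fun j B => ([set i; j] \subset B)%:R / PT k w [set i; j] - 1)).
under eq_bigr => j _ do under eq_bigr => l _ do rewrite (Eee hw hn (pj0 j) (pj0 l)).
apply: le_trans (_ : _ <= \sum_j \sum_l `|v j 0| * `|v l 0| *
   (if j == l then c2 - 1 else c1 - 1)) _.
  apply: ler_sum => j _; apply: ler_sum => l _.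
  apply: le_trans (ler_norm _) _.
  rewrite normrM; apply: ler_pM => //.
  by rewrite normrM; apply: ler_pM.
have inner j : \sum_l `|v j 0| * `|v l 0| * (if j == l then c2 - 1 else c1 - 1)
    = (c1 - 1) * \sum_l `|v j 0| * `|v l 0| + (c2 - c1) * `|v j 0| ^+ 2.
  rewrite (bigD1 j) //= eqxx [in RHS](bigD1 j) //=.
  rewrite (eq_bigr (fun l => `|v j 0| * `|v l 0| * (c1 - 1))); last first.
    by move=> l; rewrite eq_sym => /negbTE ->.
  rewrite -mulr_suml; ring.
rewrite (eq_bigr _ (fun j _ => inner j)) big_split /= -!mulr_sumr.
have n1e : norm1 v ^+ 2 = \sum_j \sum_l `|v j 0| * `|v l 0|.
  by rewrite /norm1 expr2 big_distrl; apply: eq_bigr => j _; rewrite big_distrr.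
have n2e : norm2sq v = \sum_j `|v j 0| ^+ 2.
  by rewrite /norm2sq; apply: eq_bigr => j _; rewrite real_normK ?num_real.
rewrite n1e n2e le_eqVlt; apply/orP; left; apply/eqP; ring.
Qed.
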